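(* Let $n\ge 2$ and let $F_{2n}$ be the cubic multigraph obtained from the cycle $C_{2n}$ by adding a parallel edge to every second edge of the cycle. Then the eigenvalues of $F_{2n}$ are $\pm\sqrt{4\cos(2\pi j/n)+5}$ for $j=0,1,\dots,n-1$. Consequently, $1$ is an eigenvalue of $F_{2n}$ if and only if $n$ is even, in which case it is a simple eigenvalue.
   Context: The adjacency matrix of a multigraph has $(x,y)$-entry equal to the number of edges joining $x$ and $y$; eigenvalues are those of this matrix. An eigenvalue is simple if its eigenspace is $1$-dimensional. *)

(* Defs.v *)
From HB Require Import structures.
From mathcomp Require Import all_boot all_order all_algebra.
From mathcomp Require Import reals trigo.
Set Implicit Arguments. Unset Strict Implicit. Unset Printing Implicit Defensive.
Import Order.TTheory GRing.Theory Num.Theory.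
Local Open Scope ring_scope.

(* Every second edge, namely {2k, 2k+1}, is doubled. *)
Definition cyc_adj (m : nat) (i j : nat) : bool :=
  (j == (i.+1 %% m)%N) || (i == (j.+1 %% m)%N).

Definition F_adj (R : realType) (n : nat) : 'M[R]_(n.*2) :=
  \matrix_(i < n.*2, j < n.*2)
    (if cyc_adj n.*2 i j then
       (if (i./2 == j./2)%N then 2%:R else 1%:R)
     else 0).

(* Main.v *)
Require Import Defs.
From HB Require Import structures.
From mathcomp Require Import all_boot all_order all_algebra.
From mathcomp Require Import reals trigo.
From mathcomp Require Import complex fingroup perm.
From mathcomp Require Import zify ring lra.
Import Order.TTheory GRing.Theory Num.Theory.
Local Open Scope ring_scope.
Section Generic.
Variable F : fieldType.

Lemma char_poly_conj n (P A : 'M[F]_n) : P \in unitmx ->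
  char_poly (P *m A *m invmx P) = char_poly A.
Proof.
move=> Pu; rewrite /char_poly /char_poly_mx.
have PQ : map_mx polyC P *m map_mx polyC (invmx P) = 1%:M :> 'M[{poly F}]_n.
  by rewrite -map_mxM mulmxV // map_mx1.
have QP : map_mx polyC (invmx P) *m map_mx polyC P = 1%:M :> 'M[{poly F}]_n.
  by rewrite -map_mxM mulVmx // map_mx1.
have -> : 'X%:M - map_mx polyC (P *m A *m invmx P) =
    map_mx polyC P *m ('X%:M - map_mx polyC A) *m map_mx polyC (invmx P).
  rewrite mulmxBr mulmxBl scalar_mxC -(mulmxA 'X%:M) PQ mulmx1.
  by rewrite !map_mxM.
rewrite !det_mulmx mulrC mulrA -det_mulmx QP det1 mul1r //.
Qed.

Lemma invmx_perm_mx m (s : 'S_m) : invmx (perm_mx s) = perm_mx s^-1 :> 'M[F]_m.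
Proof.
have h : perm_mx s *m perm_mx s^-1 = 1%:M :> 'M[F]_m by rewrite -perm_mxM mulgV perm_mx1.
by rewrite -[LHS]mulmx1 -h mulmxA mulVmx ?unitmx_perm // mul1mx.
Qed.

Lemma char_poly_reindex m (f : 'I_m -> 'I_m) (finj : injective f) (A : 'M[F]_m) :
  char_poly (\matrix_(i, j) A (f i) (f j)) = char_poly A.
Proof.
pose s := perm finj.
have -> : \matrix_(i, j) A (f i) (f j) = perm_mx s *m A *m invmx (perm_mx s).
  rewrite invmx_perm_mx -col_permE -row_permE.
  by apply/matrixP => i j; rewrite !mxE !permE.
by rewrite char_poly_conj // unitmx_perm.
Qed.

Lemma rank_reindex m (f : 'I_m -> 'I_m) (finj : injective f) (A : 'M[F]_m) :
  \rank (\matrix_(i, j) A (f i) (f j)) = \rank A.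
Proof.
pose s := perm finj.
have -> : \matrix_(i, j) A (f i) (f j) = perm_mx s *m A *m invmx (perm_mx s).
  rewrite invmx_perm_mx -col_permE -row_permE.
  by apply/matrixP => i j; rewrite !mxE !permE.
rewrite mxrankMfree; last by rewrite row_free_unit unitmx_inv unitmx_perm.
by rewrite (eqmxMfull _ _) // row_full_unit unitmx_perm.
Qed.

Lemma char_poly_cast m p (e : m = p) (A : 'M[F]_m) :
  char_poly (castmx (e, e) A) = char_poly A.
Proof. by case: p / e; rewrite castmx_id. Qed.

Lemma rank_cast m p (e : m = p) (A : 'M[F]_m) :
  \rank (castmx (e, e) A) = \rank A.
Proof. by case: p / e; rewrite castmx_id. Qed.

End Generic.

Section Trig.
Variable R : realType.

Lemma cos2piB (x : R) : cos (pi *+ 2 - x) = cos x.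
Proof. by rewrite addrC cosD2pi cosN. Qed.

Ltac itv := rewrite in_itv /=; apply/andP; split; lra.

Lemma cos_eqN1 (x : R) : 0 <= x -> x < pi *+ 2 -> cos x = -1 -> x = pi.
Proof.
move=> x0; rewrite mulr2n => x2 cx.
have pi0 := @pi_gt0 R.
case: (lerP x pi) => xp.
  by apply: cos_inj; [itv | itv | rewrite cx cospi].
have : pi + pi - x = pi.
  by apply: cos_inj; [itv | itv | rewrite -mulr2n cos2piB cx cospi].
lra.
Qed.

Lemma cos_neq1 (x : R) : 0 < x -> x < pi *+ 2 -> cos x != 1.
Proof.
move=> x0; rewrite mulr2n => x2; apply/eqP => cx.
have pi0 := @pi_gt0 R.
case: (lerP x pi) => xp.
  have : x = 0 by apply: cos_inj; [itv | itv | rewrite cx cos0].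
  lra.
have : pi + pi - x = 0.
  by apply: cos_inj; [itv | itv | rewrite -mulr2n cos2piB cx cos0].
lra.
Qed.
End Trig.
Section Roots.
Local Open Scope complex_scope.
Variable R : realType.
Variable n : nat.
Hypothesis hn : (2 <= n)%N.

Definition tt : R := 2 * pi / n%:R.
Definition ww : R[i] := cos tt +i* sin tt.

Lemma n_neq0 : (n%:R : R) != 0.
Proof. by rewrite pnatr_eq0 -lt0n (leq_trans _ hn). Qed.

Lemma ww_exp k : ww ^+ k = cos (k%:R * tt) +i* sin (k%:R * tt).
Proof.
elim: k => [|k IH]; first by rewrite expr0 mul0r cos0 sin0.
rewrite exprSr IH /ww /= -natr1 mulrDl mul1r cosD sinD.
congr (_ +i* _); ring.
Qed.

Lemma ww_n : ww ^+ n = 1.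
Proof.
rewrite ww_exp /tt mulrCA mulfV ?n_neq0 // mulr1.
have -> : 2 * pi = pi *+ 2 :> R by rewrite mulr_natl.
by rewrite cos2pi sin2pi.
Qed.

Lemma ww_neq1 k : (0 < k < n)%N -> ww ^+ k != 1.
Proof.
move=> /andP[k0 kn]; rewrite ww_exp; apply/negP => /eqP [] c _.
have pi0 := @pi_gt0 R.
have n0 : (0 : R) < n%:R by rewrite ltr0n (leq_trans _ hn).
have : cos (k%:R * tt) != 1.
  apply: cos_neq1; rewrite /tt.
    by apply: mulr_gt0; [rewrite ltr0n | apply: divr_gt0 => //; lra].
  rewrite mulrCA.
  have q1 : (k%:R / n%:R : R) < 1 by rewrite ltr_pdivrMr // mul1r ltr_nat.
  have q0 : (0 : R) <= k%:R / n%:R by rewrite divr_ge0 // ltW.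
  rewrite mulr2n; nra.
by rewrite c eqxx.
Qed.
End Roots.
Section Roots2.
Local Open Scope complex_scope.
Variable R : realType.
Variable n : nat.
Hypothesis hn : (2 <= n)%N.

Lemma ww_neq0 : ww R n != 0.
Proof.
apply/negP => /eqP h; have := @ww_n R n hn; rewrite h expr0n.
by case: n hn => // m _ /eqP; rewrite eq_sym oner_eq0.
Qed.

Lemma ww_inj i j : (i < n)%N -> (j < n)%N -> ww R n ^+ i = ww R n ^+ j -> i = j.
Proof.
wlog ij : i j / (i <= j)%N.
  move=> W Hi Hj E; case: (leqP i j) => h; first exact: W.
  by apply/esym/W => //; apply: ltnW.
move=> Hi Hj E; apply/eqP; rewrite eqn_leq ij /= leqNgt; apply/negP => lt.
have W : (0 < j - i < n)%N by rewrite subn_gt0 lt (leq_ltn_trans (leq_subr _ _) Hj).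
move/(@ww_neq1 R n hn)/negP: W; apply; apply/eqP.
have : ww R n ^+ i * ww R n ^+ (j - i) = ww R n ^+ i * 1.
  by rewrite -exprD subnKC ?E ?mulr1 // ltnW.
by move/(mulfI (expf_neq0 _ ww_neq0)) => ->.
Qed.

Lemma theta_eq (j : nat) : 2 * pi * j%:R / n%:R = j%:R * tt R n :> R.
Proof. by rewrite /tt mulrCA -!mulrA. Qed.

Lemma lam_eq (j : nat) :
  (2 + ww R n ^+ j) * (2 + (ww R n ^+ j) ^+ n.-1) =
  (4 * cos (2 * pi * j%:R / n%:R) + 5)%:C.
Proof.
set a := ww R n ^+ j.
have aE : a = cos (j%:R * tt R n) +i* sin (j%:R * tt R n) by rewrite /a ww_exp.
set c := cos _ in aE; set s := sin _ in aE.
have cs : c ^+ 2 + s ^+ 2 = 1 by rewrite cos2Dsin2.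
pose b := c -i* s.
have ba : b * a = 1.
  rewrite aE /b; apply/eqP; rewrite eq_complex /=; apply/andP; split; apply/eqP.
    by rewrite -cs; ring.
  by ring.
have an : a ^+ n = 1 by rewrite /a -exprM mulnC exprM (@ww_n R n hn) expr1n.
have -> : a ^+ n.-1 = b.
  by rewrite -[LHS]mul1r -ba -mulrA -exprS prednK ?an ?mulr1 // (leq_trans _ hn).
rewrite theta_eq -/c.
have -> : (2 : R[i]) = (2 : R)%:C by rewrite rmorph_nat.
rewrite aE /b; apply/eqP; rewrite eq_complex /=; apply/andP; split; apply/eqP.
  by nra.
by ring.
Qed.
End Roots2.
Section Circ.
Local Open Scope complex_scope.
Variable R : realType.
Variable n : nat.
Hypothesis hn : (2 <= n)%N.

Definition Bm : 'M[R]_n :=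
  \matrix_(k, l) (if l == k then 2 else if l == ordS k then 1 else 0).
Definition Bm' : 'M[R]_n :=
  \matrix_(k, l) (if l == k then 2 else if k == ordS l then 1 else 0).
Definition Km := Bm *m Bm'.

Definition cc (j : nat) : R := 4 * cos (2 * pi * j%:R / n%:R) + 5.

Lemma ordS_neq (k : 'I_n) : ordS k != k.
Proof.
apply/negP => /eqP/(congr1 val) /=.
have kn := ltn_ord k.
case: (ltngtP k.+1 n) => h.
- by rewrite modn_small //; lia.
- lia.
- by rewrite h modnn; lia.
Qed.

Lemma ord_pred_neq (k : 'I_n) : ord_pred k != k.
Proof.
apply/negP => /eqP h; have := ordS_neq (ord_pred k).
by rewrite ord_predK {1}h eqxx.
Qed.

Lemma sum_delta (T : pzRingType) (x : 'I_n -> T) (a : 'I_n) :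
  \sum_l (l == a)%:R * x l = x a.
Proof.
rewrite (bigD1 a) //= eqxx mul1r big1 ?addr0 // => l /negbTE ->.
by rewrite mul0r.
Qed.

Local Notation rc := (real_complex R).

Lemma Bc_mul (x : 'I_n -> R[i]) (k : 'I_n) :
  \sum_l rc (Bm k l) * x l = 2 * x k + x (ordS k).
Proof.
have E l : rc (Bm k l) = 2 * (l == k)%:R + (l == ordS k)%:R.
  rewrite !mxE; have := ordS_neq k; rewrite eq_sym.
  case: (eqVneq l k) => [-> /negbTE -> | _ _]; first by rewrite rmorph_nat addr0 mulr1.
  case: (eqVneq l (ordS k)) => _; first by rewrite rmorph1 mulr0 add0r.
  by rewrite rmorph0 mulr0 addr0.
under eq_bigr do rewrite E mulrDl -mulrA.
by rewrite big_split /= -mulr_sumr !sum_delta.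
Qed.

Lemma Bc'_mul (x : 'I_n -> R[i]) (k : 'I_n) :
  \sum_l rc (Bm' k l) * x l = 2 * x k + x (ord_pred k).
Proof.
have E l : rc (Bm' k l) = 2 * (l == k)%:R + (l == ord_pred k)%:R.
  rewrite !mxE; have -> : (k == ordS l) = (l == ord_pred k).
    by apply/eqP/eqP => [-> | ->]; rewrite ?ordSK ?ord_predK.
  have := ord_pred_neq k; rewrite eq_sym.
  case: (eqVneq l k) => [-> /negbTE -> | _ _]; first by rewrite rmorph_nat addr0 mulr1.
  case: (eqVneq l (ord_pred k)) => _; first by rewrite rmorph1 mulr0 add0r.
  by rewrite rmorph0 mulr0 addr0.
under eq_bigr do rewrite E mulrDl -mulrA.
by rewrite big_split /= -mulr_sumr !sum_delta.
Qed.

Definition Vm : 'M[R[i]]_n := \matrix_(i, j) (ww R n ^+ j) ^+ i.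
Definition lam (j : 'I_n) : R[i] := (2 + ww R n ^+ j) * (2 + (ww R n ^+ j) ^+ n.-1).

Lemma aj_n (j : nat) : (ww R n ^+ j) ^+ n = 1.
Proof. by rewrite -exprM mulnC exprM (@ww_n R n hn) expr1n. Qed.

Lemma mulmxE' (T : pzRingType) m p q (A : 'M[T]_(m, p)) (B : 'M[T]_(p, q)) i j :
  (A *m B) i j = \sum_k A i k * B k j.
Proof. by rewrite mxE. Qed.
Lemma mapmxE' (A : 'M[R]_n) i j : map_mx rc A i j = rc (A i j).
Proof. by rewrite mxE. Qed.

Lemma VmE i j : Vm i j = (ww R n ^+ j) ^+ i.
Proof. by rewrite mxE. Qed.

Lemma Km_V : map_mx rc Km *m Vm = Vm *m diag_mx (\row_j lam j).
Proof.
apply/matrixP => k j; rewrite /Km map_mxM -mulmxA mul_mx_diag mulmxE'.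
have an := aj_n j.
have -> : (\matrix_(i, j0) (Vm i j0 * (\row_j1 lam j1) 0 j0)) k j
   = (ww R n ^+ j) ^+ k * lam j by rewrite !mxE.
have H1 l : \sum_m rc (Bm' l m) * (ww R n ^+ j) ^+ m
   = (2 + (ww R n ^+ j) ^+ n.-1) * (ww R n ^+ j) ^+ l.
  rewrite (Bc'_mul (fun m => (ww R n ^+ j) ^+ m)) /= expr_mod //.
  have -> : ((l + n).-1 = l + n.-1)%N by lia.
  by rewrite exprD; ring.
under eq_bigr => l _ do [rewrite mulmxE' mapmxE'; under eq_bigr do rewrite mapmxE' VmE; rewrite H1].
rewrite (Bc_mul (fun l => (2 + (ww R n ^+ j) ^+ n.-1) * (ww R n ^+ j) ^+ l)) /= expr_mod //.
rewrite exprSr /lam; ring.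
Qed.

End Circ.
Section Circ2.
Local Open Scope complex_scope.
Variable R : realType.
Variable n : nat.
Hypothesis hn : (2 <= n)%N.
Local Notation rc := (real_complex R).

Lemma Vm_unit : Vm R n \in unitmx.
Proof.
have -> : Vm R n = Vandermonde n (\row_j (ww R n ^+ j)).
  by apply/matrixP => i j; rewrite !mxE.
rewrite unitmxE det_Vandermonde unitfE; apply/prodf_neq0 => i _.
apply/prodf_neq0 => j ij; rewrite !mxE subr_eq0; apply/eqP => /(@ww_inj R n hn _ _ (ltn_ord _) (ltn_ord _)) h.
by move: ij; rewrite h ltnn.
Qed.

Lemma lamE (j : 'I_n) : lam R n j = rc (cc R n j).
Proof. by rewrite /lam lam_eq. Qed.

Lemma Kc_conj : map_mx rc (Km R n) =
  Vm R n *m diag_mx (\row_j lam R n j) *m invmx (Vm R n).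
Proof. by rewrite -Km_V // mulmxK // Vm_unit. Qed.

Lemma char_poly_Km : char_poly (Km R n) = \prod_(j < n) ('X - (cc R n j)%:P).
Proof.
apply: (@map_poly_inj _ _ rc).
rewrite map_char_poly Kc_conj char_poly_conj ?Vm_unit //.
rewrite char_poly_trig ?diag_mx_is_trig // rmorph_prod /=.
apply: eq_bigr => j _; rewrite !mxE eqxx mulr1n lamE.
by rewrite rmorphB /= map_polyX map_polyC.
Qed.

Lemma cc_eq1 (j : nat) : (j < n)%N -> cc R n j = 1 -> j.*2 = n.
Proof.
move=> jn cj.
have pi0 := @pi_gt0 R.
have n0 : (0 : R) < n%:R by rewrite ltr0n (leq_trans _ hn).
have q1 : (j%:R / n%:R : R) < 1 by rewrite ltr_pdivrMr // mul1r ltr_nat.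
have q0 : (0 : R) <= j%:R / n%:R by rewrite divr_ge0 // ltW.
have : 2 * pi * j%:R / n%:R = pi :> R.
  apply: (@cos_eqN1 R).
  - rewrite -mulrA; apply: mulr_ge0 => //; lra.
  - by rewrite -mulrA mulr2n; nra.
  - by move: cj; rewrite /cc; lra.
move=> h.
have h2 : 2 * pi * j%:R = pi * n%:R :> R.
  by rewrite -[in RHS]h divfK // gt_eqF.
have h3 : ((2 * j)%:R : R) = n%:R.
  apply: (mulfI (lt0r_neq0 pi0)); rewrite -h2 natrM; ring.
by move/eqP: h3; rewrite eqr_nat mul2n => /eqP.
Qed.

Lemma rank_diag_ge (d : 'rV[R[i]]_n) (j0 : 'I_n) :
  (forall j, j != j0 -> d 0 j != 0) -> (n <= \rank (diag_mx d) + 1)%N.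
Proof.
move=> dnz.
pose e := \row_j (if j == j0 then 1 else d 0 j).
have eE : diag_mx e = diag_mx d + (1 - d 0 j0) *: delta_mx j0 j0.
  apply/matrixP => i j; rewrite !mxE.
  have [->|ij0] := eqVneq i j0; last by rewrite /= mulr0 addr0.
  rewrite eq_sym /=; case: (j == j0) => /=.
    by rewrite mulr1 addrC subrK.
  by rewrite mulr0 addr0 mulr0n.
have : \rank (diag_mx e) = n.
  apply: mxrank_unit; rewrite unitmxE det_diag unitfE; apply/prodf_neq0 => j _.
  by rewrite mxE; case: (eqVneq j j0) => [_ | /dnz //]; rewrite oner_eq0.
move=> rk; rewrite -[X in (X <= _)%N]rk eE; apply: (leq_trans (mxrank_add _ _)); rewrite leq_add2l.
by rewrite (leq_trans (mxrank_scale _ _)) // mxrank_delta.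
Qed.

End Circ2.
Lemma modS m x : (x < m)%N -> (x.+1 %% m = if x.+1 == m then 0 else x.+1)%N.
Proof.
move=> xm; case: eqP => [->|h]; first by rewrite modnn.
by rewrite modn_small //; lia.
Qed.
Lemma half2S a : ((a.*2.+1)./2 = a)%N.
Proof. by elim: a => //= a ->. Qed.

Lemma rank_conj (F : fieldType) m (P A : 'M[F]_m) : P \in unitmx ->
  \rank (P *m A *m invmx P) = \rank A.
Proof.
move=> Pu; rewrite mxrankMfree; last by rewrite row_free_unit unitmx_inv.
by rewrite (eqmxMfull _ _) // row_full_unit.
Qed.

Section Main.
Variable R : realType.
Variable n : nat.
Hypothesis hn : (2 <= n)%N.

Definition Fv (x y : nat) : R :=
  if cyc_adj n.*2 x y then (if (x./2 == y./2)%N then 2%:R else 1%:R) else 0.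

Definition fnat (i : nat) : nat := if (i < n)%N then i.*2 else (i - n).*2.+1.

Lemma fnat_lt (i : 'I_(n + n)) : (fnat i < n + n)%N.
Proof. clear hn. have := ltn_ord i; rewrite /fnat; case: (ltnP i n) => ?; lia. Qed.

Definition fo (i : 'I_(n + n)) : 'I_(n + n) := Ordinal (fnat_lt i).

Lemma fo_inj : injective fo.
Proof.
clear hn.
move=> i j /(congr1 val) /=; rewrite /fnat => h; apply/val_inj => /=.
have := ltn_ord i; have := ltn_ord j.
by move: h; case: (ltnP i n) => ?; case: (ltnP j n) => ?; lia.
Qed.

Definition ee : n.*2 = (n + n)%N := esym (addnn n).
Definition Mc := castmx (ee, ee) (F_adj R n).
Definition Nm := \matrix_(i, j) Mc (fo i) (fo j).

Lemma Nm_entry i j : Nm i j = Fv (fnat i) (fnat j).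
Proof. by rewrite !mxE castmxE /F_adj mxE. Qed.

Lemma fnat_l (a : 'I_n) : fnat (lshift n a) = a.*2.
Proof. by rewrite /fnat /= ltn_ord. Qed.
Lemma fnat_r (a : 'I_n) : fnat (rshift n a) = a.*2.+1.
Proof. rewrite /fnat /=; case: ltnP => h; [lia | by rewrite addKn]. Qed.

Ltac nsolve := rewrite ?modS; try lia; apply/eqP/eqP; repeat (case: ifP => /eqP ?); lia.
Ltac nsolve0 := move/eqP; rewrite ?modS; try lia; repeat (case: ifP => /eqP ?); lia.

Lemma Nm_block : Nm = block_mx 0 (Bm' R n) (Bm R n) 0.
Proof.
apply/matrixP => i j; rewrite -(splitK i) -(splitK j).
case: (split i) => a; case: (split j) => b /=;
  rewrite ?block_mxEul ?block_mxEur ?block_mxEdl ?block_mxEdr Nm_entry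
          ?fnat_l ?fnat_r !mxE /Fv /cyc_adj;
  have := ltn_ord a; have := ltn_ord b => hb ha.
- rewrite (_ : _ || _ = false) //.
  by apply/negbTE/norP; split; apply/negP; nsolve0.
- have c1 : (b.*2.+1 == a.*2.+1 %% n.*2)%N = (b == a :> nat) by nsolve.
  have c2 : (a.*2 == b.*2.+2 %% n.*2)%N = (a == ordS b :> nat) by rewrite /=; nsolve.
  rewrite c1 c2 doubleK half2S val_eqE.
  case: (eqVneq b a) => [->|ne] /=; first by rewrite eqxx.
  have ne' : (a == b :> nat) = false by apply/negbTE; rewrite val_eqE eq_sym.
  by rewrite ne'.
- have c1 : (a.*2.+1 == b.*2.+1 %% n.*2)%N = (b == a :> nat) by nsolve.
  have c2 : (b.*2 == a.*2.+2 %% n.*2)%N = (b == ordS a :> nat) by rewrite /=; nsolve.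
  rewrite c1 c2 doubleK half2S orbC val_eqE.
  case: (eqVneq b a) => [->|ne] /=; first by rewrite eqxx.
  have ne' : (a == b :> nat) = false by apply/negbTE; rewrite val_eqE eq_sym.
  by rewrite ne'.
- rewrite (_ : _ || _ = false) //.
  by apply/negbTE/norP; split; apply/negP; nsolve0.
Qed.
End Main.
Section Schur.
Variable F : fieldType.

Lemma char_poly_anti m (B B' : 'M[F]_m) :
  char_poly (block_mx 0 B' B 0) = (char_poly (B *m B')) \Po 'X^2.
Proof.
rewrite /char_poly.
set X := ('X : {poly F}).
set Bp := map_mx polyC B; set Bp' := map_mx polyC B'.
have CE : char_poly_mx (block_mx 0 B' B 0) = block_mx X%:M (- Bp') (- Bp) X%:M.
  rewrite /char_poly_mx map_block_mx !map_mx0 (scalar_mx_block m m) opp_block_mx.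
  by rewrite add_block_mx !subr0 !sub0r.
pose T := block_mx X%:M Bp' 0 X%:M.
have CT : block_mx X%:M (- Bp') (- Bp) X%:M *m T =
    block_mx (X ^+ 2)%:M 0 (- Bp *m X%:M) ((X ^+ 2)%:M - Bp *m Bp').
  rewrite /T mulmx_block !mulmx0 !addr0 -scalar_mxM -expr2 mulNmx scalar_mxC.
  by rewrite subrr [in X in block_mx _ _ _ X]mulNmx [in X in block_mx _ _ _ X]addrC.
have dT : \det T = X ^+ m * X ^+ m by rewrite det_ublock det_scalar.
have E : \det (block_mx X%:M (- Bp') (- Bp) X%:M) * \det T =
    \det ((X ^+ 2)%:M - Bp *m Bp') * \det T.
  rewrite -det_mulmx CT det_lblock det_scalar dT mulrC; congr (_ * _).
  by rewrite -exprD -exprM; congr (_ ^+ _); lia.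
have nz : \det T != 0 by rewrite dT mulf_neq0 // expf_neq0 // polyX_eq0.
rewrite CE (mulIf nz E) -det_map_mx; congr (\det _).
apply/matrixP => i j; rewrite !mxE rmorphB /= rmorphMn /= comp_polyX comp_polyC.
by congr (_ - _); rewrite rmorph_sum; apply: eq_bigr => k _; rewrite !mxE rmorphM.
Qed.

Lemma rank_block_anti m (B B' : 'M[F]_m) :
  \rank (block_mx (- 1%:M) B' B (- 1%:M)) = (m + \rank (B *m B' - 1%:M)%R)%N.
Proof.
pose L := block_mx 1%:M 0 B 1%:M : 'M[F]_(m + m).
pose Rr := block_mx 1%:M B' 0 1%:M : 'M[F]_(m + m).
have Lu : L \in unitmx by rewrite unitmxE det_lblock det1 mul1r unitr1.
have Ru : Rr \in unitmx by rewrite unitmxE det_ublock det1 mul1r unitr1.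
have E : L *m block_mx (- 1%:M) B' B (- 1%:M) *m Rr =
    block_mx (- 1%:M) 0 0 (B *m B' - 1%:M).
  rewrite /L /Rr !mulmx_block !mul1mx !mul0mx !mulmx1 !mulmx0 ?addr0 ?add0r.
  by rewrite mulNmx mul1mx addNr mulmxN mulmx1 addNr mul0mx add0r.
have r1 : \rank (L *m block_mx (- 1%:M) B' B (- 1%:M) *m Rr) =
    \rank (block_mx (- 1%:M) B' B (- 1%:M)).
  rewrite mxrankMfree; last by rewrite row_free_unit.
  by rewrite (eqmxMfull _ _) // row_full_unit.
rewrite -r1 E.
by rewrite rank_diag_block_mx mxrank_opp mxrank1.
Qed.
End Schur.
Section Final.
Local Open Scope complex_scope.
Variable R : realType.
Variable n : nat.
Hypothesis hn : (2 <= n)%N.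
Local Notation rc := (real_complex R).

Lemma rank_Km1 : (n <= \rank (Km R n - 1%:M)%R + 1)%N.
Proof.
rewrite -(mxrank_map rc) map_mxB map_mx1 Kc_conj //.
set V := Vm R n; set D := diag_mx _.
have Vu : V \in unitmx by apply: Vm_unit.
have -> : V *m D *m invmx V - 1%:M = V *m (D - 1%:M) *m invmx V.
  by rewrite mulmxBr mulmxBl mulmx1 mulmxV.
rewrite rank_conj //.
have -> : D - 1%:M = diag_mx (\row_j (lam R n j - 1)).
  apply/matrixP => i j; rewrite !mxE; case: (i == j) => //=.
  by rewrite !mulr0n subr0.
have hl (j : 'I_n) : (lam R n j - 1 == 0) = (cc R n j == 1).
  by rewrite lamE // -(rmorph1 rc) -rmorphB fmorph_eq0 subr_eq0.
case: (pickP (fun j : 'I_n => cc R n j == 1)) => [j0 hj0 | hno].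
  apply: (@rank_diag_ge R n _ j0) => j ne; rewrite mxE hl.
  apply/eqP => hj; move/eqP: hj0 => hj0.
  have := @cc_eq1 R n hn j (ltn_ord j) hj; have := @cc_eq1 R n hn j0 (ltn_ord j0) hj0.
  move=> h1 h2; move/eqP: ne; apply; apply/val_inj => /=; lia.
have j0 : 'I_n by exists 0%N; lia.
apply: (@rank_diag_ge R n _ j0) => j _; rewrite mxE hl.
by rewrite hno.
Qed.
End Final.
Lemma cast_sub1 (F : fieldType) m p (e : m = p) (A : 'M[F]_m) :
  castmx (e, e) (A - 1%:M) = castmx (e, e) A - 1%:M.
Proof. by case: p / e; rewrite !castmx_id. Qed.

Theorem proposition6p1 (R : realType) (n : nat) (hn : (2 <= n)%N) :
  char_poly (F_adj R n) =
    \prod_(j < n)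
       (('X - (Num.sqrt (4 * cos (2 * pi * j%:R / n%:R) + 5))%:P) *
        ('X + (Num.sqrt (4 * cos (2 * pi * j%:R / n%:R) + 5))%:P))
  /\ (eigenvalue (F_adj R n) 1 <-> ~~ odd n)
  /\ (~~ odd n -> \rank (eigenspace (F_adj R n) 1) = 1%N).
Proof.
have cpN : char_poly (F_adj R n) = \prod_(j < n) ('X ^+ 2 - (cc R n j)%:P).
  transitivity (char_poly (Nm R n)).
    by rewrite /Nm (@char_poly_reindex _ _ _ (@fo_inj n)) /Mc char_poly_cast.
  rewrite (@Nm_block R n hn); etransitivity; first exact: (@char_poly_anti R n (Bm R n) (Bm' R n)).
  rewrite (@char_poly_Km R n hn) rmorph_prod.
  by apply: eq_bigr => j _; rewrite rmorphB /= comp_polyX comp_polyC.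
have sq (j : 'I_n) : ('X - (Num.sqrt (4 * cos (2 * pi * j%:R / n%:R) + 5))%:P) *
        ('X + (Num.sqrt (4 * cos (2 * pi * j%:R / n%:R) + 5))%:P) =
        'X ^+ 2 - (cc R n j)%:P :> {poly R}.
  have h0 : 0 <= 4 * cos (2 * pi * j%:R / n%:R) + 5 :> R.
    by have := cos_geN1 (2 * pi * j%:R / n%:R : R); lra.
  by rewrite -subr_sqr -rmorphXn /= sqr_sqrtr.
have ev : eigenvalue (F_adj R n) 1 <-> ~~ odd n.
  rewrite eigenvalue_root_char cpN /root horner_prod; split.
    move=> /prodf_eq0 [j _]; rewrite !hornerE expr1n subr_eq0 => /eqP h.
    by rewrite -(@cc_eq1 R n hn j (ltn_ord j) (esym h)) odd_double.
  move=> ev; apply/prodf_eq0.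
  have hlt : (n./2 < n)%N by rewrite -{2}(odd_double_half n) (negbTE ev) add0n -addnn; lia.
  exists (Ordinal hlt) => //; rewrite !hornerE expr1n subr_eq0 /cc /=.
  have nE : n%:R = 2 * (n./2)%:R :> R.
    by rewrite -{1}(odd_double_half n) (negbTE ev) add0n -mul2n natrM.
  have h0 : (n./2)%:R != 0 :> R.
    by rewrite pnatr_eq0 -lt0n half_gt0.
  rewrite nE (_ : 2 * pi * (n./2)%:R / (2 * (n./2)%:R) = pi).
    by rewrite cospi; apply/eqP; lra.
  by field; rewrite h0.
split; first by rewrite cpN; apply: eq_bigr => j _; rewrite sq.
split => // evn.
have := @rank_Km1 R n hn.
have rk : \rank (F_adj R n - 1%:M) = (n + \rank (Km R n - 1%:M)%R)%N.
  rewrite -(@rank_cast _ _ _ (@ee n)) cast_sub1 -/(Mc R n).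
  rewrite -(@rank_reindex _ _ _ (@fo_inj n)).
  have -> : \matrix_(i, j) (Mc R n - 1%:M) (fo n i) (fo n j) = Nm R n - 1%:M.
    by apply/matrixP => i j; rewrite !mxE (inj_eq (@fo_inj n)).
  rewrite (@Nm_block R n hn) (scalar_mx_block n n) opp_block_mx add_block_mx !sub0r !subr0.
  by rewrite rank_block_anti.
have : eigenvalue (F_adj R n) 1 by apply/ev.
rewrite /eigenvalue /eigenspace -mxrank_eq0 mxrank_ker rk -lt0n.
lia.
Qed.
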